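(* Let $D$ be an integral domain that is not a field. Then $D$ is a RAV-domain if and only if $D$ is an AV-domain and its integral closure $\overline{D}$ is a rational valuation domain.
   Context: For a domain $D$ that is not a field, an element $a\in D$ is an almost uniformizing parameter if for each nonzero nonunit $y\in D$ there are natural numbers $m,n$ and a unit $u$ of $D$ with $y^m=ua^n$; a RAV-domain (rational almost valuation domain) is a domain having an almost uniformizing parameter. An AV-domain is a domain in which for all nonzero $a,b$ there is $n\ge1$ with $a^n\mid b^n$ or $b^n\mid a^n$. A rational valuation domain is a valuation domain whose value group is order-isomorphic to a subgroup of $(\mathbb{Q},+)$. $\overline{D}$ is the integral closure of $D$ in its quotient field. *)

(* Defs.v *)
From HB Require Import structures.
From mathcomp Require Import all_boot all_order all_algebra.
Set Implicit Arguments. Unset Strict Implicit. Unset Printing Implicit Defensive.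
Import Order.TTheory GRing.Theory Num.Theory.
Local Open Scope ring_scope.

Definition dvdr (D : comNzRingType) (a b : D) : Prop := exists c : D, b = a * c.

Definition is_field_dom (D : idomainType) : Prop :=
  forall x : D, x != 0 -> x \is a GRing.unit.

(* a is an almost uniformizing parameter of D ("natural numbers" = positive). *)
Definition almost_unif_param (D : idomainType) (a : D) : Prop :=
  forall y : D, y != 0 -> y \isn't a GRing.unit ->
    exists (m n : nat) (u : D), (0 < m)%N /\ (0 < n)%N /\
      u \is a GRing.unit /\ y ^+ m = u * a ^+ n.

Definition RAV_domain (D : idomainType) : Prop :=
  exists a : D, almost_unif_param a.

Definition AV_domain (D : idomainType) : Prop :=
  forall a b : D, a != 0 -> b != 0 ->
    exists n : nat, (0 < n)%N /\ (dvdr (a ^+ n) (b ^+ n) \/ dvdr (b ^+ n) (a ^+ n)).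

Definition toK (D : idomainType) (x : D) : {fraction D} := @FracField.tofrac D x.

Definition integral_closure (D : idomainType) (x : {fraction D}) : Prop :=
  exists p : {poly D}, p \is monic /\ root (map_poly (@toK D) p) x.

Definition valuation_domain_in (K : fieldType) (V : K -> Prop) : Prop :=
  forall x : K, x != 0 -> V x \/ V x^-1.

(* The value group of V is K^* / U(V), ordered by xU <= yU iff y/x in V.
   It is order-isomorphic to a subgroup of (Q,+) iff there is a map
   phi : K -> rat which is a group homomorphism on K^* and satisfies
   phi x <= phi y <-> y / x in V (this makes the induced map on K^*/U(V)
   a well-defined injective order embedding). *)
Definition rational_value_group_in (K : fieldType) (V : K -> Prop) : Prop :=
  exists phi : K -> rat,
    (forall x y : K, x != 0 -> y != 0 -> phi (x * y) = phi x + phi y) /\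
    (forall x y : K, x != 0 -> y != 0 -> (phi x <= phi y <-> V (y / x))).

Definition rational_valuation_domain_in (K : fieldType) (V : K -> Prop) : Prop :=
  valuation_domain_in V /\ rational_value_group_in V.

(* Main.v *)
Require Import Defs.
From HB Require Import structures.
From mathcomp Require Import all_boot all_order all_algebra.
Set Warnings "-redundant-canonical-projection".
From mathcomp Require Import ring lra zify.
From Stdlib Require Import ClassicalEpsilon Classical.
Import Order.TTheory GRing.Theory Num.Theory.
Set Implicit Arguments. Unset Strict Implicit. Unset Printing Implicit Defensive.
Local Open Scope ring_scope.

HB.instance Definition _ (D : idomainType) :=
  GRing.RMorphism.copy (@toK D) (@FracField.tofrac D).

Section Bd.
Variable D : idomainType.
Local Notation F := (@toK D).

Lemma F_eq (x y : D) : (F x == F y) = (x == y).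
Proof. exact: tofrac_eq. Qed.
Lemma F_inj : injective F.
Proof. by move=> x y /eqP; rewrite F_eq => /eqP. Qed.
Lemma F0 : F 0 = 0. Proof. exact: tofrac0. Qed.
Lemma F1 : F 1 = 1. Proof. exact: tofrac1. Qed.
Lemma FM x y : F (x * y) = F x * F y. Proof. exact: tofracM. Qed.
Lemma FX x n : F (x ^+ n) = F x ^+ n. Proof. exact: tofracXn. Qed.
Lemma Fnz x : (F x != 0) = (x != 0). Proof. by rewrite /toK tofrac_eq0. Qed.

Lemma horner_bound (r : {poly D}) (a b : D) (n : nat) : b != 0 -> (size r <= n)%N ->
  exists e : D, F b ^+ n * (map_poly F r).[F a / F b] = F e.
Proof.
move=> bnz hs.
have Fb : F b != 0 by rewrite Fnz.
exists (\sum_(i < size r) r`_i * a ^+ i * b ^+ (n - i)).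
rewrite horner_coef (size_map_inj_poly F_inj F0) mulr_sumr /toK rmorph_sum.
apply: eq_bigr => i _.
rewrite coef_map !rmorphM !rmorphXn /= -/(toK _) -/(toK _) -/(toK _).
have hi : (i <= n)%N by apply: leq_trans (ltnW (ltn_ord i)) hs.
rewrite expr_div_n (expfB_cond _ (x := F b)); last by rewrite (negPf Fb) add0n.
rewrite !mulrA; congr (_ * _); by rewrite [RHS]mulrC !mulrA.
Qed.
End Bd.
Section Bd2.
Variable D : idomainType.
Local Notation F := (@toK D).
Lemma int_bound (z : {fraction D}) (a b : D) : b != 0 -> z = F a / F b ->
  integral_closure z -> exists n, forall j, exists e, F b ^+ n * z ^+ j = F e.
Proof.
move=> bnz -> [p [mp rp]].
exists (size p).-1 => j.
have pnz : p != 0 by apply: monic_neq0.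
have := Pdiv.RingMonic.rdivp_eq mp 'X^j.
set q := Pdiv.Ring.rdivp _ _; set r := Pdiv.Ring.rmodp _ _ => hX.
have hs : (size r <= (size p).-1)%N.
  have := Pdiv.Ring.ltn_rmodpN0 ('X^j) pnz.
  by rewrite -/r; case: (size p).
have [e he] := @horner_bound D r a b (size p).-1 bnz hs.
exists e; rewrite -he; congr (_ * _).
have -> : (F a / F b) ^+ j = (map_poly F 'X^j).[F a / F b].
  by rewrite map_polyXn hornerXn.
rewrite {1}hX rmorphD rmorphM /= hornerD hornerM.
by move/eqP: rp => ->; rewrite mulr0 add0r.
Qed.

Lemma unit_of_int_inv (c : D) : c != 0 -> integral_closure (F c)^-1 -> c \is a GRing.unit.
Proof.
move=> cnz hV.
have [n hn] := int_bound (a := 1) cnz (esym (div1r _)) hV.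
have [e he] := hn n.+1.
have Fc : F c != 0 by rewrite Fnz.
have : F c ^+ n * (F c)^-1 ^+ n.+1 = (F c)^-1.
  by rewrite exprS mulrCA -exprMn mulfV // expr1n mulr1.
rewrite he => /(congr1 (fun x => F c * x)).
rewrite mulfV // -FM => /esym h1.
apply/unitrPr; exists e; apply: F_inj; by rewrite F1 -h1.
Qed.
End Bd2.

Section V.
Variable D : idomainType.
Variable t : D.
Hypothesis ht : almost_unif_param t.
Hypothesis tnz : t != 0.
Hypothesis tnu : t \isn't a GRing.unit.

Lemma t_pow_unit (x : D) (s : nat) : (0 < s)%N -> x * t ^+ s \is a GRing.unit -> False.
Proof. by move=> s0; rewrite unitrM unitrX_pos // (negPf tnu) andbF. Qed.

Lemma cancel_t (u w : D) (n k : nat) : u \is a GRing.unit -> w \is a GRing.unit ->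
  u * t ^+ n = w * t ^+ k -> n = k.
Proof.
move=> uu wu.
have tX : forall i, t ^+ i != 0 by move=> i; rewrite expf_neq0.
wlog nk : u w n k uu wu / (n <= k)%N.
  move=> H e; case: (leqP n k) => h; first exact: (H u w n k uu wu h e).
  by apply/esym; apply: (H w u k n wu uu (ltnW h)); rewrite e.
move=> e; rewrite -(subnK nk) exprD mulrA in e.
move/(mulIf (tX n)): e => e.
case: (posnP (k - n)) => h; first by apply/eqP; rewrite eqn_leq nk -subn_eq0 h.
by exfalso; apply: (@t_pow_unit w _ h); rewrite -e.
Qed.

Lemma rep_exists (d : D) : d != 0 -> exists m n u, (0 < m)%N /\ u \is a GRing.unit /\ d ^+ m = u * t ^+ n.
Proof.
move=> dnz; case: (boolP (d \is a GRing.unit)) => du.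
  by exists 1%N, 0%N, d; rewrite expr1 expr0 mulr1.
have [m [n [u [m0 [n0 [uu e]]]]]] := ht dnz du.
by exists m, n, u.
Qed.

Lemma rep_uniq (d u u' : D) (m n m' n' : nat) : d != 0 -> u \is a GRing.unit -> u' \is a GRing.unit ->
  d ^+ m = u * t ^+ n -> d ^+ m' = u' * t ^+ n' -> (n * m' = n' * m)%N.
Proof.
move=> dnz uu uu' e e'.
apply: (@cancel_t (u ^+ m') (u' ^+ m)); rewrite ?unitrX //.
by rewrite !exprM -!exprMn -e -e' -!exprM mulnC.
Qed.

Definition rp (d : D) (mn : nat * nat) : Prop :=
  (0 < mn.1)%N /\ exists u, u \is a GRing.unit /\ d ^+ mn.1 = u * t ^+ mn.2.

Definition v (d : D) : rat :=
  let mn := epsilon (inhabits (1%N, 0%N)) (rp d) in (mn.2)%:R / (mn.1)%:R.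

Lemma v_spec (d u : D) (m n : nat) : d != 0 -> (0 < m)%N -> u \is a GRing.unit ->
  d ^+ m = u * t ^+ n -> v d = n%:R / m%:R.
Proof.
move=> dnz m0 uu e.
rewrite /v; set mn := epsilon _ _.
have : rp d mn by apply: epsilon_spec; exists (m, n); split => //; exists u.
case=> m1 [u1 [uu1 e1]].
have h := rep_uniq dnz uu1 uu e1 e.
apply/eqP; rewrite eqr_div ?pnatr_eq0 -?lt0n //.
by rewrite -!natrM h.
Qed.


Lemma v_mul (a b : D) : a != 0 -> b != 0 -> v (a * b) = v a + v b.
Proof.
move=> anz bnz.
have [m [n [u [m0 [uu e]]]]] := rep_exists anz.
have [m' [n' [w [m0' [wu e']]]]] := rep_exists bnz.
rewrite (v_spec anz m0 uu e) (v_spec bnz m0' wu e').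
have abz : a * b != 0 by rewrite mulf_neq0.
have mm0 : (0 < m * m')%N by rewrite muln_gt0 m0 m0'.
have uw : u ^+ m' * w ^+ m \is a GRing.unit by rewrite unitrM !unitrX.
have E : (a * b) ^+ (m * m') = (u ^+ m' * w ^+ m) * t ^+ (n * m' + n' * m).
  rewrite exprMn exprM e.
  rewrite mulnC exprM e' !exprMn exprD -!exprM.
  by ring.
rewrite (v_spec abz mm0 uw E) natrD !natrM.
have hm : (m%:R : rat) != 0 by rewrite pnatr_eq0 -lt0n.
have hm' : (m'%:R : rat) != 0 by rewrite pnatr_eq0 -lt0n.
field; by rewrite hm hm'.
Qed.

Lemma v_ge0 (d : D) : 0 <= v d.
Proof. by rewrite /v divr_ge0 // ler0n. Qed.

Lemma v_unit (d : D) : d \is a GRing.unit -> v d = 0.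
Proof.
move=> du; have dnz : d != 0 by apply: contraTneq du => ->; rewrite unitr0.
by rewrite (@v_spec d d 1 0) ?expr1 ?expr0 ?mulr1 // mul0r.
Qed.

Lemma v_le (a b : D) : a != 0 -> b != 0 -> v a <= v b ->
  exists M c, (0 < M)%N /\ b ^+ M = c * a ^+ M.
Proof.
move=> anz bnz.
have [m [n [u [m0 [uu e]]]]] := rep_exists anz.
have [m' [n' [w [m0' [wu e']]]]] := rep_exists bnz.
rewrite (v_spec anz m0 uu e) (v_spec bnz m0' wu e').
have hm : (0 < m%:R :> rat) by rewrite ltr0n.
have hm' : (0 < m'%:R :> rat) by rewrite ltr0n.
rewrite ler_pdivrMr // mulrAC ler_pdivlMr // -!natrM ler_nat => h.
exists (m * m')%N, (w ^+ m * u^-1 ^+ m' * t ^+ (n' * m - n * m')).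
split; first by rewrite muln_gt0 m0 m0'.
have hu : u^-1 ^+ m' * u ^+ m' = 1 by rewrite exprVn mulVr // unitrX.
rewrite (exprM a) e (mulnC m m') (exprM b) e' !exprMn -!exprM.
rewrite -(subnK h) exprD.
set A := t ^+ (_ - _); set B := t ^+ (n * m')%N.
rewrite [RHS](_ : _ = w ^+ m * A * B * (u^-1 ^+ m' * u ^+ m')); last by ring.
by rewrite hu mulr1 mulrA /A /B addnK.
Qed.

Lemma v_lt (a b : D) : a != 0 -> b != 0 -> v a < v b ->
  exists M s w, (0 < M)%N /\ (0 < s)%N /\ w \is a GRing.unit /\ b ^+ M = w * t ^+ s * a ^+ M.
Proof.
move=> anz bnz.
have [m [n [u [m0 [uu e]]]]] := rep_exists anz.
have [m' [n' [w [m0' [wu e']]]]] := rep_exists bnz.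
rewrite (v_spec anz m0 uu e) (v_spec bnz m0' wu e').
have hm : (0 < m%:R :> rat) by rewrite ltr0n.
have hm' : (0 < m'%:R :> rat) by rewrite ltr0n.
rewrite ltr_pdivrMr // mulrAC ltr_pdivlMr // -!natrM ltr_nat => h.
exists (m * m')%N, (n' * m - n * m')%N, (w ^+ m * u^-1 ^+ m').
split; first by rewrite muln_gt0 m0 m0'.
split; first by rewrite subn_gt0.
split; first by rewrite unitrM !unitrX ?unitrV.
have hu : u^-1 ^+ m' * u ^+ m' = 1 by rewrite exprVn mulVr // unitrX.
rewrite (exprM a) e (mulnC m m') (exprM b) e' !exprMn -!exprM.
rewrite -(subnK (ltnW h)) exprD.
set A := t ^+ (_ - _); set B := t ^+ (n * m')%N.
rewrite [RHS](_ : _ = w ^+ m * A * B * (u^-1 ^+ m' * u ^+ m')); last by ring.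
by rewrite hu mulr1 mulrA /A /B addnK.
Qed.

Lemma not_all_div (d : D) : d != 0 -> ~ (forall k, exists e, d = e * t ^+ k).
Proof.
move=> dnz H.
have [m [n [u [m0 [uu e]]]]] := rep_exists dnz.
have [c hc] := H n.+1.
have hs : (n <= n.+1 * m)%N by nia.
have : u * t ^+ n = (c ^+ m * t ^+ (n.+1 * m - n)) * t ^+ n.
  by rewrite -e hc exprMn -exprM -mulrA -exprD subnK // mulnC.
move/(mulIf (expf_neq0 n tnz)) => hu.
apply: (@t_pow_unit (c ^+ m) (n.+1 * m - n)); last by rewrite -hu.
by rewrite subn_gt0; nia.
Qed.
End V.

Local Open Scope quotient_scope.
Lemma frac_repr (D : idomainType) (x : {fraction D}) :
  exists n d : D, d != 0 /\ x = (toK n) / (toK d).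
Proof.
elim/quotW: x => r.
exists (r.1 : D), (r.2 : D); split; first exact: denom_ratioP.
rewrite /toK; unlock FracField.tofrac.
rewrite -[_^-1]/(FracField.inv _) -[_ * _]/(FracField.mul _ _).
rewrite !piE.
apply/eqmodP => /=. rewrite FracField.equivfE /=.
rewrite /FracField.mulf /FracField.invf /=.
rewrite !numden_Ratio ?oner_eq0 ?denom_ratioP //.
by rewrite !mul1r mulr1 mulrC. by rewrite mul1r denom_ratioP. by rewrite mul1r denom_ratioP.
Qed.
Local Close Scope quotient_scope.

Section W.
Variable D : idomainType.
Variable t : D.
Hypothesis ht : almost_unif_param t.
Hypothesis tnz : t != 0.
Hypothesis tnu : t \isn't a GRing.unit.
Local Notation F := (@toK D).
Local Notation v := (v t).

Definition phi (x : {fraction D}) : rat :=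
  let ab := epsilon (inhabits (0 : D, 1 : D))
    (fun ab : D * D => ab.2 != 0 /\ x = F ab.1 / F ab.2) in v ab.1 - v ab.2.

Lemma phi_spec (a b : D) : a != 0 -> b != 0 -> phi (F a / F b) = v a - v b.
Proof.
move=> anz bnz.
have H := epsilon_spec (inhabits (0 : D, 1 : D))
  (fun ab : D * D => ab.2 != 0 /\ F a / F b = F ab.1 / F ab.2)
  (ex_intro _ (a, b) (conj bnz erefl)).
rewrite /phi; move: H; case: (epsilon _ _) => a' b' /= [bnz' e].
have Fa : F a != 0 by rewrite Fnz.
have Fb : F b != 0 by rewrite Fnz.
have Fb' : F b' != 0 by rewrite Fnz.
have anz' : a' != 0.
  apply/eqP => a0; move/eqP: (e); rewrite a0 F0 mul0r mulf_eq0 invr_eq0 (negPf Fa) (negPf Fb) //=.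
have e2 : a * b' = a' * b by apply/eqP; rewrite -F_eq !FM -eqr_div //; apply/eqP.
have := congr1 v e2; rewrite !v_mul // => h.
by lra.
Qed.


Lemma phi_mul (x y : {fraction D}) : x != 0 -> y != 0 -> phi (x * y) = phi x + phi y.
Proof.
move=> xnz ynz.
have [a [b [bnz ex]]] := frac_repr x.
have [c [d [dnz ey]]] := frac_repr y.
have anz : a != 0 by apply: contraNneq xnz => a0; rewrite ex a0 F0 mul0r.
have cnz : c != 0 by apply: contraNneq ynz => c0; rewrite ey c0 F0 mul0r.
have Fb : F b != 0 by rewrite Fnz.
have Fd : F d != 0 by rewrite Fnz.
have -> : x * y = F (a * c) / F (b * d) by rewrite ex ey !FM invfM mulrACA.
rewrite ex ey !phi_spec ?mulf_neq0 // !v_mul //; lra.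
Qed.

Lemma Z_to (p q : D) : p != 0 -> q != 0 -> v q <= v p -> integral_closure (F p / F q).
Proof.
move=> pnz qnz h.
have [M [c [M0 e]]] := v_le ht tnz tnu qnz pnz h.
exists ('X^M - c%:P); split; first exact: monicXnsubC.
have Fq : F q != 0 by rewrite Fnz.
rewrite /root rmorphB /= map_polyXn map_polyC /= hornerD hornerN hornerXn hornerC.
rewrite expr_div_n -!FX e FM subr_eq0 mulfK // FX expf_neq0 //.
Qed.

Lemma Z_from (p q : D) : p != 0 -> q != 0 -> integral_closure (F p / F q) -> v q <= v p.
Proof.
move=> pnz qnz hV.
rewrite leNgt; apply/negP => h.
have [M [s [w [M0 [s0 [wu e]]]]]] := v_lt ht tnz tnu pnz qnz h.
have [n hn] := int_bound qnz erefl hV.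
have qn : q ^+ n != 0 by rewrite expf_neq0.
apply: (not_all_div ht tnz tnu qn) => k.
have [e1 he1] := hn (M * k)%N.
have Fq : F q != 0 by rewrite Fnz.
have Fp : F p != 0 by rewrite Fnz.
have wnz : w != 0 by apply: contraTneq wu => ->; rewrite unitr0.
have Fw : F (w * t ^+ s) != 0 by rewrite Fnz mulf_neq0 ?expf_neq0.
have zM : (F p / F q) ^+ M * F (w * t ^+ s) = 1.
  have FpM : F (p ^+ M) != 0 by rewrite Fnz expf_neq0.
  rewrite expr_div_n -!FX e (FM (w * t ^+ s)) invfM mulrCA mulfV // mulr1 mulVf //.
have : F (q ^+ n) = F (e1 * (w * t ^+ s) ^+ k).
  rewrite FX -[F q ^+ n]mulr1 -(expr1n _ k) -zM exprMn mulrA -exprM he1.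
  by rewrite FM FX.
move/F_inj => ->.
exists (e1 * w ^+ k * t ^+ (s * k - k)).
rewrite exprMn -exprM -!mulrA -exprD subnK //.
by rewrite leq_pmull.
Qed.

End W.

Lemma commens (r p : rat) : 0 < r -> 0 < p ->
  exists m n : nat, (0 < m)%N /\ (0 < n)%N /\ m%:R * r = n%:R * p.
Proof.
move=> r0 p0.
exists (`|numq p| * `|denq r|)%N, (`|numq r| * `|denq p|)%N.
have hp : 0 < numq p by rewrite numq_gt0.
have hr : 0 < numq r by rewrite numq_gt0.
split; first by rewrite muln_gt0 !absz_gt0 denq_neq0 gt_eqF.
split; first by rewrite muln_gt0 !absz_gt0 denq_neq0 gt_eqF.
rewrite !natrM !natr_absz !gtr0_norm ?denq_gt0 //.
rewrite -!mulrA [(denq r)%:~R * r]mulrC [(denq p)%:~R * p]mulrC -!numqE.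
by rewrite mulrC.
Qed.

Theorem theorem11 (D : idomainType) (hD : ~ is_field_dom D) :
  RAV_domain D <->
  (AV_domain D /\ rational_valuation_domain_in (@integral_closure D)).
Proof.
have [y0 [y0nz y0nu]] : exists y : D, y != 0 /\ y \isn't a GRing.unit.
  apply: NNPP => H; apply: hD => x xnz; apply/negPn/negP => xu; apply: H; by exists x.
have Fnz' : forall z : D, z != 0 -> toK z != 0 by move=> z; rewrite Fnz.
split.
- move=> [t ht].
  have [m [n [u [m0 [n0 [uu e]]]]]] := ht y0 y0nz y0nu.
  have tnz : t != 0.
    apply: contraNneq y0nz => t0.
    have : y0 ^+ m == 0 by rewrite e t0 expr0n eqn0Ngt n0 mulr0.
    by rewrite expf_eq0 m0.
  have tnu : t \isn't a GRing.unit.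
    apply: contra y0nu => tu.
    by rewrite -(unitrX_pos _ m0) e unitrM uu unitrX.
  split.
  + move=> a b anz bnz.
    case/orP: (le_total (v t a) (v t b)) => h.
      have [M [c [M0 eM]]] := v_le ht tnz tnu anz bnz h.
      by exists M; split => //; left; exists c; rewrite mulrC.
    have [M [c [M0 eM]]] := v_le ht tnz tnu bnz anz h.
    by exists M; split => //; right; exists c; rewrite mulrC.
  + split.
    * move=> x xnz.
      have [a [b [bnz ex]]] := frac_repr x.
      have anz : a != 0 by apply: contraNneq xnz => a0; rewrite ex a0 F0 mul0r.
      case/orP: (le_total (v t a) (v t b)) => h.
        by right; rewrite ex invf_div; exact: (Z_to ht tnz tnu bnz anz h).
      by left; rewrite ex; exact: (Z_to ht tnz tnu anz bnz h).
    * exists (phi t); split; first by move=> x y; exact: (phi_mul ht tnz tnu).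
      move=> x y xnz ynz.
      have [a [b [bnz ex]]] := frac_repr x.
      have anz : a != 0 by apply: contraNneq xnz => a0; rewrite ex a0 F0 mul0r.
      have [c [d [dnz ey]]] := frac_repr y.
      have cnz : c != 0 by apply: contraNneq ynz => c0; rewrite ey c0 F0 mul0r.
      have -> : y / x = toK (c * b) / toK (d * a).
        by rewrite ex ey !FM invf_div invfM mulrACA.
      rewrite ex ey !(phi_spec ht tnz tnu) //.
      have cb : c * b != 0 by rewrite mulf_neq0.
      have da : d * a != 0 by rewrite mulf_neq0.
      split => h.
        apply: (Z_to ht tnz tnu cb da); rewrite !(v_mul ht tnz tnu) //; lra.
      have := Z_from ht tnz tnu cb da h; rewrite !(v_mul ht tnz tnu) //; lra.
- move=> [AV [_ [phi [phiM phiO]]]].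
  have phi1 : phi 1 = 0.
    by have := phiM 1 1 (oner_neq0 _) (oner_neq0 _); rewrite mulr1 => h; lra.
  have phiX : forall x k, x != 0 -> phi (x ^+ k) = k%:R * phi x.
    move=> x k xnz; elim: k => [|k IH]; first by rewrite expr0 phi1 mul0r.
    rewrite exprS phiM ?expf_neq0 // IH -[k.+1]addn1 natrD; lra.
  have unit0 : forall c : D, c != 0 -> phi (toK c) <= 0 -> c \is a GRing.unit.
    move=> c cnz h. move: (@unit_of_int_inv D c cnz); apply.
    rewrite -div1r; apply/(phiO _ _ (Fnz' _ cnz) (oner_neq0 _)); by rewrite phi1.
  have pos : forall y : D, y != 0 -> y \isn't a GRing.unit -> 0 < phi (toK y).
    move=> y ynz ynu; rewrite ltNge; apply/negP => h.
    by move/negP: ynu; apply; apply: unit0.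
  exists y0 => y ynz ynu.
  have [m [n [m0 [n0 emn]]]] := commens (pos y ynz ynu) (pos y0 y0nz y0nu).
  have ym : y ^+ m != 0 by rewrite expf_neq0.
  have an : y0 ^+ n != 0 by rewrite expf_neq0.
  have [k [k0 [[c hc]|[c hc]]]] := AV _ _ ym an.
  + have cnz : c != 0.
      apply/eqP => c0; move: hc; rewrite c0 mulr0 => /eqP; apply/negP; exact: expf_neq0.
    have hphi : phi (toK c) = 0.
      have := congr1 (fun z => phi (toK z)) hc; rewrite /= FM phiM ?Fnz' ?expf_neq0 //.
      rewrite -!exprM !FX !phiX ?Fnz' //.
      rewrite mulnC [(m * k)%N]mulnC !natrM -!mulrA -emn => h; lra.
    have cu : c \is a GRing.unit by apply: unit0 cnz _; rewrite hphi.
    exists (m * k)%N, (n * k)%N, c^-1; split; first by rewrite muln_gt0 m0.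
    split; first by rewrite muln_gt0 n0.
    split; first by rewrite unitrV.
    by rewrite !exprM hc mulrC mulrK.
  + have cnz : c != 0.
      apply/eqP => c0; move: hc; rewrite c0 mulr0 => /eqP; apply/negP; exact: expf_neq0.
    have hphi : phi (toK c) = 0.
      have := congr1 (fun z => phi (toK z)) hc; rewrite /= FM phiM ?Fnz' ?expf_neq0 //.
      rewrite -!exprM !FX !phiX ?Fnz' //.
      rewrite mulnC [(n * k)%N]mulnC !natrM -!mulrA emn => h; lra.
    have cu : c \is a GRing.unit by apply: unit0 cnz _; rewrite hphi.
    exists (m * k)%N, (n * k)%N, c; split; first by rewrite muln_gt0 m0.
    split; first by rewrite muln_gt0 n0.
    split => //.
    by rewrite !exprM hc mulrC.
Qed.
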